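(* Let $G$ be a modular noetherian right $\ell$-group in which the meet $s^{-1} := \bigwedge X(G^-)$ exists. Then an element $g \in G^-$ is meet-irreducible in $G^-$ if and only if $g$ is a dual chain, i.e. the interval $[g,e]$ is a chain.
   Context: A right $\ell$-group is a group $G$ (identity $e$) with a right-invariant partial order making $G$ a lattice. It is modular if the lattice is modular. It is noetherian if for each $g$ the set $\{h \geq g\}$ satisfies the descending chain condition and the set $\{h \leq g\}$ satisfies the ascending chain condition. $G^- = \{g \leq e\}$, $X(G^-)$ is the set of elements covered by $e$, and $[a,b] = \{x : a \leq x \leq b\}$. An element $g$ is meet-irreducible in $G^-$ if there are no $a,b \in G^-$, both different from $g$, with $g = a\wedge b$. *)

(* Defs.v *)
Set Implicit Arguments.

Section RLG.
Variables (T : Type) (mul : T -> T -> T) (inv : T -> T) (e : T)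
  (le : T -> T -> Prop) (meet join : T -> T -> T).

Definition lt (x y : T) : Prop := le x y /\ x <> y.

Definition is_group : Prop :=
  (forall x y z, mul x (mul y z) = mul (mul x y) z) /\
  (forall x, mul e x = x) /\ (forall x, mul x e = x) /\
  (forall x, mul (inv x) x = e) /\ (forall x, mul x (inv x) = e).

Definition is_partial_order : Prop :=
  (forall x, le x x) /\ (forall x y, le x y -> le y x -> x = y) /\
  (forall x y z, le x y -> le y z -> le x z).

Definition right_invariant : Prop :=
  forall x y z, le x y -> le (mul x z) (mul y z).

Definition is_lattice : Prop :=
  (forall x y, le (meet x y) x /\ le (meet x y) y /\
     forall z, le z x -> le z y -> le z (meet x y)) /\
  (forall x y, le x (join x y) /\ le y (join x y) /\
     forall z, le x z -> le y z -> le (join x y) z).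

Definition is_right_lgroup : Prop :=
  is_group /\ is_partial_order /\ right_invariant /\ is_lattice.

Definition modular : Prop :=
  forall a b c, le a c -> join a (meet b c) = meet (join a b) c.

Definition noetherian : Prop :=
  forall g,
    (~ exists f : nat -> T, (forall n, le g (f n)) /\ (forall n, lt (f (S n)) (f n))) /\
    (~ exists f : nat -> T, (forall n, le (f n) g) /\ (forall n, lt (f n) (f (S n)))).

Definition negcone (x : T) : Prop := le x e.

Definition covered_by_e (x : T) : Prop :=
  lt x e /\ ~ exists y, lt x y /\ lt y e.

Definition is_glb (P : T -> Prop) (m : T) : Prop :=
  (forall x, P x -> le m x) /\ (forall z, (forall x, P x -> le z x) -> le z m).

Definition meet_irreducible_neg (g : T) : Prop :=
  negcone g /\
  ~ exists a b, negcone a /\ negcone b /\ a <> g /\ b <> g /\ g = meet a b.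

Definition dual_chain (g : T) : Prop :=
  forall x y, le g x -> le x e -> le g y -> le y e -> le x y \/ le y x.

End RLG.

(* Main.v *)
Require Import Defs.
From Stdlib Require Import Classical ClassicalEpsilon.

Section RL.
Variables (T : Type) (mul : T -> T -> T) (inv : T -> T) (e : T)
  (le : T -> T -> Prop) (meet join : T -> T -> T).
Hypothesis HG : is_right_lgroup mul inv e le meet join.
Hypothesis Hmod : modular le meet join.
Hypothesis Hnoeth : noetherian le.

Local Infix "*" := mul.
Local Infix "<=" := le.

Lemma assoc x y z : x * (y * z) = (x * y) * z.
Proof. destruct HG as [[H _] _]. apply H. Qed.
Lemma idl x : e * x = x.
Proof. destruct HG as [[_ [H _]] _]. apply H. Qed.
Lemma idr x : x * e = x.
Proof. destruct HG as [[_ [_ [H _]]] _]. apply H. Qed.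
Lemma invl x : inv x * x = e.
Proof. destruct HG as [[_ [_ [_ [H _]]]] _]. apply H. Qed.
Lemma invr x : x * inv x = e.
Proof. destruct HG as [[_ [_ [_ [_ H]]]] _]. apply H. Qed.
Lemma le_refl x : x <= x.
Proof. destruct HG as [_ [[H _] _]]. apply H. Qed.
Lemma le_anti x y : x <= y -> y <= x -> x = y.
Proof. destruct HG as [_ [[_ [H _]] _]]. apply H. Qed.
Lemma le_trans x y z : x <= y -> y <= z -> x <= z.
Proof. destruct HG as [_ [[_ [_ H]] _]]. apply H. Qed.
Lemma le_r x y z : x <= y -> x * z <= y * z.
Proof. destruct HG as [_ [_ [H _]]]. apply H. Qed.
Lemma meet_l x y : meet x y <= x.
Proof. destruct HG as [_ [_ [_ [H _]]]]. apply H. Qed.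
Lemma meet_r x y : meet x y <= y.
Proof. destruct HG as [_ [_ [_ [H _]]]]. apply H. Qed.
Lemma meet_glb x y z : z <= x -> z <= y -> z <= meet x y.
Proof. destruct HG as [_ [_ [_ [H _]]]]. apply H. Qed.
Lemma join_l x y : x <= join x y.
Proof. destruct HG as [_ [_ [_ [_ H]]]]. apply H. Qed.
Lemma join_r x y : y <= join x y.
Proof. destruct HG as [_ [_ [_ [_ H]]]]. apply H. Qed.
Lemma join_lub x y z : x <= z -> y <= z -> join x y <= z.
Proof. destruct HG as [_ [_ [_ [_ H]]]]. apply H. Qed.
Lemma modl a b c : a <= c -> join a (meet b c) = meet (join a b) c.
Proof. apply Hmod. Qed.

Lemma mulKV x y : inv x * (x * y) = y.
Proof. rewrite assoc, invl, idl. reflexivity. Qed.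
Lemma mulVK x y : x * (inv x * y) = y.
Proof. rewrite assoc, invr, idl. reflexivity. Qed.

Ltac gn := repeat rewrite <- assoc; repeat (rewrite ?mulKV, ?mulVK, ?idl, ?idr, ?invl, ?invr).

Lemma mul_cancel_r x y z : x * z = y * z -> x = y.
Proof. intro H. assert (H2: x * z * inv z = y * z * inv z) by (rewrite H; reflexivity).
  revert H2; gn; auto. Qed.
Lemma mul_cancel_l x y z : z * x = z * y -> x = y.
Proof. intro H. assert (H2: inv z * (z * x) = inv z * (z * y)) by (rewrite H; reflexivity).
  revert H2; gn; auto. Qed.
Lemma inv_inv x : inv (inv x) = x.
Proof. apply mul_cancel_r with (inv x). rewrite invl, invr. reflexivity. Qed.
Lemma inv_mul x y : inv (x * y) = inv y * inv x.
Proof. apply mul_cancel_r with (x * y). rewrite invl. gn. reflexivity. Qed.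
Lemma inv_e : inv e = e.
Proof. apply mul_cancel_r with e. rewrite invl, idl. reflexivity. Qed.
Lemma inv_uniq x y : x * y = e -> y = inv x.
Proof. intro H. apply mul_cancel_l with x. rewrite H, invr. reflexivity. Qed.

Ltac gn2 := repeat rewrite ?inv_mul, ?inv_inv, ?inv_e; gn.

Lemma le_r_iff x y z : x * z <= y * z <-> x <= y.
Proof. split; [|apply le_r]. intro H. apply (le_r _ _ (inv z)) in H. revert H; gn; auto. Qed.
Lemma le_N x y : x <= y <-> x * inv y <= e.
Proof. split; intro H.
  - apply (le_r _ _ (inv y)) in H. revert H; gn; auto.
  - apply (le_r _ _ y) in H. revert H; gn; auto. Qed.
Lemma leN1 x y : x <= y -> x * inv y <= e.
Proof. apply le_N. Qed.
Lemma leN2 x y : x * inv y <= e -> x <= y.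
Proof. apply le_N. Qed.
Lemma N_mul x y : x <= e -> y <= e -> x * y <= e.
Proof. intros Hx Hy. apply le_trans with (e * y). apply le_r; auto. rewrite idl; auto. Qed.
Lemma N_mul_le x y : x <= e -> x * y <= y.
Proof. intros Hx. apply le_trans with (e * y). apply le_r; auto. rewrite idl; apply le_refl. Qed.
Lemma N_inv x : x <= e -> e <= inv x.
Proof. intro H. apply (le_r _ _ (inv x)) in H. revert H; gn; auto. Qed.
Lemma P_inv x : e <= x -> inv x <= e.
Proof. intro H. apply (le_r _ _ (inv x)) in H. revert H; gn; auto. Qed.

Lemma meet_eq x y : x <= y -> meet x y = x.
Proof. intro H. apply le_anti. apply meet_l. apply meet_glb; auto using le_refl. Qed.
Lemma meet_eq' x y : y <= x -> meet x y = y.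
Proof. intro H. apply le_anti. apply meet_r. apply meet_glb; auto using le_refl. Qed.
Lemma join_eq x y : x <= y -> join x y = y.
Proof. intro H. apply le_anti. apply join_lub; auto using le_refl. apply join_r. Qed.
Lemma join_eq' x y : y <= x -> join x y = x.
Proof. intro H. apply le_anti. apply join_lub; auto using le_refl. apply join_l. Qed.
Lemma meet_comm x y : meet x y = meet y x.
Proof. apply le_anti; apply meet_glb; auto using meet_l, meet_r. Qed.
Lemma join_comm x y : join x y = join y x.
Proof. apply le_anti; apply join_lub; auto using join_l, join_r. Qed.
Lemma meet_mul x y z : meet (x * z) (y * z) = meet x y * z.
Proof. apply le_anti.
  - rewrite <- (le_r_iff _ _ (inv z)). gn. apply meet_glb.
    + rewrite <- (le_r_iff _ _ z). gn. apply meet_l.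
    + rewrite <- (le_r_iff _ _ z). gn. apply meet_r.
  - apply meet_glb; apply le_r; auto using meet_l, meet_r. Qed.
Lemma join_mul x y z : join (x * z) (y * z) = join x y * z.
Proof. apply le_anti.
  - apply join_lub; apply le_r; auto using join_l, join_r.
  - rewrite <- (le_r_iff _ _ (inv z)). gn. apply join_lub.
    + rewrite <- (le_r_iff _ _ z). gn. apply join_l.
    + rewrite <- (le_r_iff _ _ z). gn. apply join_r.
Qed.


Local Notation "x < y" := (lt le x y).
Local Notation X := (covered_by_e e le).
Definition cov x y := x < y /\ forall z, x <= z -> z <= y -> z = x \/ z = y.

Lemma lt_r_iff x y z : x * z < y * z <-> x < y.
Proof. unfold lt. rewrite le_r_iff. split; intros [H1 H2]; split; auto.
  intro E; apply H2; subst; auto. intro E; apply H2. apply mul_cancel_r in E; auto. Qed.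

Lemma X_cov a : X a <-> cov a e.
Proof. unfold covered_by_e, cov. split.
  - intros [H1 H2]; split; auto. intros z Hz1 Hz2.
    destruct (classic (z = a)); auto. destruct (classic (z = e)); auto.
    exfalso; apply H2; exists z; unfold lt; auto.
  - intros [H1 H2]; split; auto. intros [y [[Hy1 Hy2] [Hy3 Hy4]]].
    destruct (H2 y Hy1 Hy3); auto. Qed.

Lemma cov_r x y z : cov x y <-> cov (x * z) (y * z).
Proof. unfold cov. rewrite lt_r_iff. split; intros [H1 H2]; split; auto.
  - intros w Hw1 Hw2. destruct (H2 (w * inv z)).
    + rewrite <- (le_r_iff _ _ z). gn. auto.
    + rewrite <- (le_r_iff _ _ z). gn. auto.
    + left. rewrite <- H. gn. auto.
    + right. rewrite <- H. gn. auto.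
  - intros w Hw1 Hw2. destruct (H2 (w * z)).
    + apply le_r; auto.
    + apply le_r; auto.
    + left. apply mul_cancel_r in H; auto.
    + right. apply mul_cancel_r in H; auto. Qed.

Lemma cov_X x y : cov x y <-> X (x * inv y).
Proof. rewrite X_cov. rewrite (cov_r x y (inv y)). rewrite invr. tauto. Qed.

Lemma cov_le x y : cov x y -> x <= y.
Proof. intros [[H _] _]; auto. Qed.
Lemma cov_ne x y : cov x y -> x <> y.
Proof. intros [[_ H] _]; auto. Qed.
Lemma X_le a : X a -> a <= e.
Proof. intros [[H _] _]; auto. Qed.
Lemma X_ne a : X a -> a <> e.
Proof. intros [[_ H] _]; auto. Qed.

Lemma min_elt g (P : T -> Prop) : (exists x, P x) -> (forall x, P x -> g <= x) ->
  exists x, P x /\ forall y, P y -> y <= x -> y = x.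
Proof. intros [x0 H0] Hg. apply NNPP. intro Hn.
  assert (step : forall x, P x -> exists y, P y /\ y < x).
  { intros x Hx. apply NNPP. intro H1. apply Hn. exists x. split; auto.
    intros y Hy Hyx. apply NNPP. intro Hne. apply H1. exists y. split; auto. split; auto. }
  pose (S := {x | P x}).
  assert (F : forall s : S, {t : S | proj1_sig t < proj1_sig s}).
  { intro s. destruct (constructive_indefinite_description _ (step _ (proj2_sig s))) as [y [Hy1 Hy2]].
    exists (exist P y Hy1). simpl. auto. }
  pose (f := fun n => proj1_sig (Nat.iter n (fun s => proj1_sig (F s)) (exist P x0 H0))).
  destruct (Hnoeth g) as [Hd _]. apply Hd. exists f. split.
  - intro n. unfold f. apply Hg. apply proj2_sig.
  - intro n. unfold f. simpl. apply (proj2_sig (F _)). Qed.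

Lemma max_elt g (P : T -> Prop) : (exists x, P x) -> (forall x, P x -> x <= g) ->
  exists x, P x /\ forall y, P y -> x <= y -> y = x.
Proof. intros [x0 H0] Hg. apply NNPP. intro Hn.
  assert (step : forall x, P x -> exists y, P y /\ x < y).
  { intros x Hx. apply NNPP. intro H1. apply Hn. exists x. split; auto.
    intros y Hy Hyx. apply NNPP. intro Hne. apply H1. exists y. split; auto. split; auto. }
  pose (S := {x | P x}).
  assert (F : forall s : S, {t : S | proj1_sig s < proj1_sig t}).
  { intro s. destruct (constructive_indefinite_description _ (step _ (proj2_sig s))) as [y [Hy1 Hy2]].
    exists (exist P y Hy1). simpl. auto. }
  pose (f := fun n => proj1_sig (Nat.iter n (fun s => proj1_sig (F s)) (exist P x0 H0))).
  destruct (Hnoeth g) as [_ Hd]. apply Hd. exists f. split.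
  - intro n. unfold f. apply Hg. apply proj2_sig.
  - intro n. unfold f. simpl. apply (proj2_sig (F _)). Qed.

Lemma up_cover x y : x < y -> exists z, cov x z /\ z <= y.
Proof. intros [H1 H2].
  destruct (min_elt x (fun z => x < z /\ z <= y)) as [z [[Hz1 Hz2] Hz3]].
  - exists y. split; [split|]; auto using le_refl.
  - intros z [[H _] _]; auto.
  - exists z. split; auto. split; auto. intros w Hw1 Hw2.
    destruct (classic (w = x)); auto. right. apply Hz3; auto. split; [split|]; auto.
    apply le_trans with z; auto. Qed.

Lemma down_cover x y : x < y -> exists z, x <= z /\ cov z y.
Proof. intros [H1 H2].
  destruct (max_elt y (fun z => x <= z /\ z < y)) as [z [[Hz1 Hz2] Hz3]].
  - exists x. split; [|split]; auto using le_refl.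
  - intros z [_ [H _]]; auto.
  - exists z. split; auto. split; auto. intros w Hw1 Hw2.
    destruct (classic (w = y)); auto. left. apply Hz3; auto. split; [|split]; auto.
    apply le_trans with z; auto. Qed.

Lemma cov_up p a x : cov p a -> ~ a <= x -> p <= x -> cov x (join x a).
Proof. intros [[Hpa Hne] Hc] Hax Hpx.
  assert (Hm : meet a x = p).
  { destruct (Hc (meet a x)) as [E|E]; auto.
    - apply meet_glb; auto. - apply meet_l.
    - exfalso. apply Hax. rewrite <- E. apply meet_r. }
  split. split. apply join_l. intro E. apply Hax. rewrite E. apply join_r.
  intros z Hz1 Hz2.
  destruct (Hc (meet a z)) as [E|E].
  - apply meet_glb; auto. apply le_trans with x; auto.
  - apply meet_l.
  - left. transitivity (meet (join x a) z).
    + symmetry. apply meet_eq'. auto.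
    + rewrite <- modl by auto. rewrite E. apply join_eq'. auto.
  - right. apply le_anti; auto. apply join_lub; auto. rewrite <- E. apply meet_r. Qed.


Lemma cov_down a q x : cov a q -> ~ x <= a -> x <= q -> cov (meet x a) x.
Proof. intros [[Haq Hne] Hc] Hxa Hxq.
  assert (Hj : join a x = q).
  { destruct (Hc (join a x)) as [E|E]; auto.
    - apply join_l. - apply join_lub; auto.
    - exfalso. apply Hxa. rewrite <- E. apply join_r. }
  split. split. apply meet_l. intro E. apply Hxa. rewrite <- E. apply meet_r.
  intros z Hz1 Hz2.
  destruct (Hc (join a z)) as [E|E].
  - apply join_l.
  - apply join_lub; auto. apply le_trans with x; auto.
  - left. apply le_anti. apply meet_glb; auto. rewrite <- E. apply join_r.
    auto.
  - right. transitivity (join z (meet a x)).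
    + symmetry. apply join_eq'. rewrite meet_comm. auto.
    + rewrite modl by auto. rewrite join_comm, E. apply meet_eq'. auto.
Qed.

Variable D : T.
Hypothesis HD : is_glb le X D.
Hypothesis HDe : D <= e.

Lemma D_le a : X a -> D <= a.
Proof. apply HD. Qed.
Lemma D_glb z : (forall a, X a -> z <= a) -> z <= D.
Proof. apply HD. Qed.

Lemma QC y : y <= e -> D * y <= D.
Proof. intro Hy. apply D_glb. intros b Hb. destruct (classic (y <= b)) as [H|H].
  - apply le_trans with y; auto. apply N_mul_le; auto.
  - assert (Hc := cov_down b e y (proj1 (X_cov b) Hb) H Hy).
    apply cov_X in Hc. apply D_le in Hc.
    apply le_trans with (meet y b). 2: apply meet_r.
    apply (le_r _ _ y) in Hc. revert Hc. gn. auto. Qed.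

Lemma QC' y : y <= e -> D * y * inv D <= e.
Proof. intro Hy. apply (proj1 (le_N _ _)). apply QC; auto. Qed.

Lemma cov_e_inv c : X c -> cov e (inv c).
Proof. intro Hc. apply X_cov in Hc. apply (cov_r _ _ (inv c)) in Hc. revert Hc. gn. auto. Qed.

Lemma le_antiN x : x <= e -> inv x <= e -> x = e.
Proof. intros H1 H2. apply le_anti; auto. apply N_inv in H2. rewrite inv_inv in H2. auto. Qed.

Lemma balance c : X c -> inv c * D <= e.
Proof. intro Hc. apply NNPP. intro Hn.
  assert (HeD : e <= inv D) by (apply N_inv; auto).
  assert (Hce : cov e (inv c)) by (apply cov_e_inv; auto).
  assert (Hn' : ~ inv c <= inv D).
  { intro H. apply Hn. apply le_N in H. rewrite inv_inv in H. auto. }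
  set (K := join (inv D) (inv c)).
  assert (HK : cov (inv D) K) by (apply (cov_up e); auto).
  set (b := inv D * inv K).
  assert (Hb : X b) by (apply cov_X; auto).
  assert (HKb : inv K = D * b) by (unfold b; gn; auto).
  set (z := inv c * D * b).
  assert (Hz : z <= e).
  { assert (H : inv c <= K) by apply join_r. apply le_N in H. rewrite HKb in H.
    unfold z. revert H. gn. auto. }
  set (J := D * b).
  assert (HJ : J = c * z) by (unfold J, z; gn; auto).
  assert (HJz : cov J z).
  { apply cov_X. rewrite HJ. gn. auto. }
  assert (HJb : J <= b) by (apply N_mul_le; auto).
  assert (Hzb : ~ z <= b).
  { intro H. apply le_N in H. apply Hn. revert H. unfold z. gn. auto. }
  assert (Hbe : X b) by auto.
  assert (Hmzb : meet z b = J).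
  { destruct (proj2 HJz (meet z b)) as [E|E]; auto.
    - apply meet_glb; auto. apply cov_le; auto.
    - apply meet_l.
    - exfalso. apply Hzb. rewrite <- E. apply meet_r. }
  assert (Hjzb : join b z = e).
  { destruct (proj2 (proj1 (X_cov b) Hb) (join b z)) as [E|E]; auto.
    - apply join_l.
    - apply join_lub; auto. apply X_le; auto.
    - exfalso. apply Hzb. rewrite <- E. apply join_r. }
  assert (HDz : D <= z).
  { assert (Hall : forall a, X a -> D <= join (a * b) z).
    { intros a Ha. set (y := join (a * b) z).
      assert (Hy : y <= e).
      { apply join_lub; auto. apply N_mul; apply X_le; auto. }
      destruct (classic (b <= y)) as [H|H].
      - assert (E : y = e).
        { apply le_anti; auto. rewrite <- Hjzb. apply join_lub; auto. apply join_r. }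
        rewrite E; auto.
      - assert (Hab : cov (a * b) b) by (apply cov_X; gn; auto).
        assert (H2 := cov_up _ _ _ Hab H (join_l _ _)).
        assert (E : join y b = e).
        { apply le_anti. apply join_lub; auto. apply X_le; auto.
          rewrite <- Hjzb. apply join_lub. apply join_r. apply le_trans with y.
          apply join_r. apply join_l. }
        rewrite E in H2. apply D_le. apply X_cov. auto. }
    set (t := join D z).
    assert (Ht : forall a, X a -> meet t b <= a * b).
    { intros a Ha. apply le_trans with (meet (join (a * b) z) b).
      - apply meet_glb. apply le_trans with t. apply meet_l.
        apply join_lub; auto. apply join_r. apply meet_r.
      - rewrite <- modl. rewrite Hmzb. apply join_lub. apply le_refl.
        unfold J. apply le_r. apply D_le; auto. apply N_mul_le. apply X_le; auto. }
    assert (Htb : meet t b <= J).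
    { unfold J. rewrite <- (le_r_iff _ _ (inv b)). gn. apply D_glb. intros a Ha.
      rewrite <- (le_r_iff _ _ b). gn. auto. }
    assert (Hte : t <= e) by (apply join_lub; auto).
    assert (Ht2 : t = join z (meet b t)).
    { rewrite modl. rewrite join_comm, Hjzb. symmetry. apply meet_eq'. auto.
      apply join_r. }
    apply le_trans with t. apply join_l. rewrite Ht2. apply join_lub. apply le_refl.
    rewrite meet_comm. apply le_trans with J; auto. apply cov_le; auto. }
  destruct (proj2 HJz (join D J)) as [E|E].
  - apply join_r.
  - apply join_lub; auto. apply cov_le; auto.
  - assert (H : D <= J) by (rewrite <- E; apply join_l).
    apply le_N in H. unfold J in H.
    assert (H2 : D * b * inv D <= e) by (apply QC'; apply X_le; auto).
    assert (E2 : D * b * inv D = e).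
    { apply le_antiN; auto. revert H. gn2. auto. }
    apply (X_ne b); auto. apply mul_cancel_l with D. apply mul_cancel_r with (inv D).
    rewrite E2. gn. auto.
  - apply Hzb. apply le_trans with (join D J). rewrite E. apply le_refl.
    apply join_lub; auto. apply D_le; auto.
Qed.

Inductive FM : T -> Prop :=
| FM_e : FM e
| FM_m y a : FM y -> X a -> FM (meet y a).

Lemma FM_bnd y : FM y -> D <= y /\ y <= e.
Proof. induction 1 as [|y a H [IH1 IH2] Ha].
  - split; auto using le_refl.
  - split. apply meet_glb; auto. apply D_le; auto.
    apply le_trans with y; auto. apply meet_l. Qed.

Lemma complement x : D <= x -> x <= e ->
  exists y, D <= y /\ y <= e /\ meet x y = D /\ join x y = e.
Proof. intros Hx1 Hx2.
  destruct (min_elt D (fun y => FM y /\ join x y = e)) as [y [[Hy1 Hy2] Hy3]].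
  - exists e. split. constructor. apply join_eq; auto.
  - intros y [Hy _]. apply FM_bnd; auto.
  - destruct (FM_bnd _ Hy1) as [Hy4 Hy5]. exists y. repeat split; auto.
    apply NNPP. intro Hne.
    assert (Hnd : ~ meet x y <= D).
    { intro H. apply Hne. apply le_anti; auto. apply meet_glb; auto. }
    assert (Hm : exists m, X m /\ ~ meet x y <= m).
    { apply NNPP. intro H. apply Hnd. apply D_glb. intros a Ha. apply NNPP. intro H2.
      apply H. exists a; auto. }
    destruct Hm as [m [Hm1 Hm2]].
    assert (Hym : ~ y <= m).
    { intro H. apply Hm2. apply le_trans with y; auto. apply meet_r. }
    assert (Hcov := cov_down m e y (proj1 (X_cov m) Hm1) Hym Hy5).
    assert (Hj : join x (meet y m) <> e).
    { intro H. assert (E : meet y m = y).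
      { apply Hy3. split; auto. constructor; auto. apply meet_l. }
      apply (cov_ne _ _ Hcov); auto. }
    apply Hj. destruct (proj2 Hcov (join (meet y m) (meet x y))) as [E|E].
    + apply join_l.
    + apply join_lub. apply meet_l. apply meet_r.
    + exfalso. apply Hm2. apply le_trans with (meet y m). rewrite <- E. apply join_r.
      apply meet_r.
    + rewrite modl in E by apply meet_l. apply le_anti.
      * apply join_lub; auto. apply le_trans with y. apply meet_l. auto.
      * rewrite <- Hy2. apply join_lub. apply join_l. apply le_trans with (join (meet y m) x).
        apply le_trans with (meet (join (meet y m) x) y). rewrite E; apply le_refl.
        apply meet_l. apply join_lub. apply join_r. apply join_l.
Qed.

Lemma comp_T Tp x : D * Tp <= x -> x <= Tp ->
  exists y, D * Tp <= y /\ y <= Tp /\ meet x y = D * Tp /\ join x y = Tp.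
Proof. intros H1 H2.
  destruct (complement (x * inv Tp)) as [y [Hy1 [Hy2 [Hy3 Hy4]]]].
  - rewrite <- (le_r_iff _ _ Tp). gn. auto.
  - rewrite <- (le_r_iff _ _ Tp). gn. auto.
  - exists (y * Tp). repeat split.
    + apply le_r; auto.
    + rewrite <- (idl Tp) at 2. apply le_r; auto.
    + rewrite <- (mulVK Tp x) at 1. rewrite assoc. rewrite invr, idl.
      replace x with (x * inv Tp * Tp) at 1 by (gn; auto).
      rewrite meet_mul, Hy3. auto.
    + replace x with (x * inv Tp * Tp) at 1 by (gn; auto).
      rewrite join_mul, Hy4, idl. auto.
Qed.

Lemma rel_comp Tp p q x : D * Tp <= p -> p <= x -> x <= q -> q <= Tp ->
  exists y, p <= y /\ y <= q /\ meet x y = p /\ join x y = q.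
Proof. intros H1 H2 H3 H4.
  destruct (comp_T Tp x) as [y0 [Hy1 [Hy2 [Hy3 Hy4]]]].
  - apply le_trans with p; auto.
  - apply le_trans with q; auto.
  - exists (meet (join y0 p) q). repeat split.
    + apply meet_glb. apply join_r. apply le_trans with x; auto.
    + apply meet_r.
    + assert (E : meet x (meet (join y0 p) q) = meet x (join y0 p)).
      { apply le_anti. apply meet_glb. apply meet_l. apply le_trans with (meet (join y0 p) q).
        apply meet_r. apply meet_l. apply meet_glb. apply meet_l. apply meet_glb.
        apply meet_r. apply le_trans with x; auto. apply meet_l. }
      rewrite E, meet_comm, join_comm, <- modl by auto. rewrite meet_comm, Hy3.
      apply join_eq'. auto.
    + rewrite modl by auto. apply meet_eq'. apply le_trans with Tp; auto.
      rewrite <- Hy4. apply join_lub. apply join_l. apply le_trans with (join y0 p).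
      apply join_l. apply join_r.
Qed.

Lemma atom2 Tp p q w : D * Tp <= p -> q <= Tp -> cov p w -> w <= q -> w <> q ->
  exists y, cov p y /\ y <= q /\ y <> w.
Proof. intros H1 H2 H3 H4 H5.
  destruct (rel_comp Tp p q w) as [t [Ht1 [Ht2 [Ht3 Ht4]]]]; auto. apply cov_le; auto.
  assert (Hpt : p < t).
  { split; auto. intro E. subst t. apply H5. rewrite <- Ht4. symmetry. apply join_eq'.
    apply cov_le; auto. }
  destruct (up_cover p t Hpt) as [y [Hy1 Hy2]]. exists y. split; [|split]; auto.
  apply le_trans with t; auto. intro E. subst y. apply (cov_ne _ _ H3).
  rewrite <- Ht3. apply meet_eq. auto.
Qed.

Lemma inv_inj x y : inv x = inv y -> x = y.
Proof. intro H. rewrite <- (inv_inv x), <- (inv_inv y), H. auto. Qed.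

Lemma bcD b c : X b -> X c -> inv b * c * D <= e.
Proof. intros Hb Hc. destruct (classic (b = c)) as [E|Hne].
  - subst. gn. auto.
  - assert (Hec : e <= inv c) by (apply N_inv; apply X_le; auto).
    assert (Hcb := cov_e_inv b Hb).
    assert (Hbc : ~ inv b <= inv c).
    { intro H. destruct (proj2 (cov_e_inv c Hc) (inv b)) as [E|E]; auto.
      apply cov_le; auto.
      apply (X_ne b); auto. rewrite <- (inv_inv b), E, inv_e. auto.
      apply Hne, inv_inj; auto. }
    assert (Hj := cov_up _ _ _ Hcb Hbc Hec).
    set (j := join (inv c) (inv b)) in *.
    assert (Hc2 : X (inv c * inv j)) by (apply cov_X; auto).
    assert (H1 : inv b * inv j <= e) by (apply leN1; apply join_r).
    assert (H2 := balance _ Hc2).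
    assert (H3 := N_mul _ _ H1 H2). revert H3. gn2. auto.
Qed.

Inductive FJ : T -> Prop :=
| FJ_D : FJ D
| FJ_j s z : FJ s -> cov D z -> FJ (join s z).

Lemma upD_le z : cov D z -> z <= e.
Proof. intro H. apply cov_X in H. apply balance in H. revert H. gn2. auto. Qed.

Lemma FJ_bnd s : FJ s -> D <= s /\ s <= e.
Proof. induction 1 as [|s z H [IH1 IH2] Hz].
  - split; auto using le_refl.
  - split. apply le_trans with s; auto. apply join_l.
    apply join_lub; auto. apply upD_le; auto. Qed.

Lemma FJ_top : FJ e.
Proof.
  destruct (max_elt e FJ) as [s [Hs1 Hs2]].
  - exists D. constructor.
  - intros; apply FJ_bnd; auto.
  - destruct (FJ_bnd _ Hs1) as [Hs3 Hs4].
    destruct (classic (s = e)) as [E|Hne]. subst; auto.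
    exfalso. destruct (complement s) as [s' [H1 [H2 [H3 H4]]]]; auto.
    assert (HDs : D < s').
    { split; auto. intro E. subst s'. apply Hne. rewrite <- H4. symmetry. apply join_eq'. auto. }
    destruct (up_cover _ _ HDs) as [y [Hy1 Hy2]].
    assert (E : join s y = s).
    { apply Hs2. constructor; auto. apply join_l. }
    apply (cov_ne _ _ Hy1). apply le_anti. apply cov_le; auto.
    rewrite <- H3. apply meet_glb; auto. rewrite <- E. apply join_r. Qed.

Lemma FJ_bound c : X c -> forall s, FJ s -> s <= inv D * inv c * D.
Proof. intros Hc s Hs. induction Hs as [|s z H IH Hz].
  - apply leN2. gn2. apply N_mul; auto. apply X_le; auto.
  - apply join_lub; auto. apply cov_X in Hz. assert (H2 := bcD _ _ Hz Hc).
    apply leN2. revert H2. gn2. auto. Qed.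

Lemma key c : X c -> inv D * c * D <= e.
Proof. intro Hc. assert (H := FJ_bound c Hc e FJ_top). apply leN1 in H. revert H. gn2. auto. Qed.

Lemma t_atom c : X c -> X (inv D * c * D).
Proof. intro Hc. apply X_cov. set (t := inv D * c * D).
  assert (Ht : t <= e) by (apply key; auto).
  assert (Hct : D * t * inv D = c) by (unfold t; gn; auto).
  split. split; auto. intro E. apply (X_ne c); auto. rewrite <- Hct, E. gn. auto.
  intros z Hz1 Hz2.
  assert (Hp : D * z * inv D <= e) by (apply QC'; auto).
  assert (Hle : c <= D * z * inv D).
  { apply leN2. rewrite <- Hct. assert (H := QC' (t * inv z) (leN1 _ _ Hz1)).
    revert H. gn2. auto. }
  destruct (proj2 (proj1 (X_cov c) Hc) _ Hle Hp) as [E|E].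
  - left. apply (mul_cancel_l _ _ D). apply (mul_cancel_r _ _ (inv D)). rewrite E, Hct. auto.
  - right. apply (mul_cancel_l _ _ D). apply (mul_cancel_r _ _ (inv D)). rewrite E. gn. auto.
Qed.

Lemma claimC c d1 w : X c -> X d1 -> inv d1 <= inv w -> inv d1 <> inv w -> inv w <= inv D ->
  exists d, X d /\ inv d <= inv w /\ inv d <= inv D * c.
Proof. intros Hc Hd1 H1 H2 H3.
  set (Z := inv D * c).
  assert (HZ : cov Z (inv D)).
  { apply cov_X. unfold Z. rewrite inv_inv. apply t_atom; auto. }
  assert (HeZ : e <= Z).
  { assert (H := N_inv _ (balance c Hc)). revert H. unfold Z. gn2. auto. }
  assert (Hed1 : e <= inv d1) by (apply N_inv; apply X_le; auto).
  destruct (classic (inv d1 <= Z)) as [H|H].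
  - exists d1. auto.
  - assert (Hj := cov_up _ _ _ (cov_e_inv d1 Hd1) H HeZ).
    assert (Hd1D : inv d1 <= inv D).
    { apply leN2. rewrite inv_inv. apply balance; auto. }
    assert (E : join Z (inv d1) = inv D).
    { destruct (proj2 HZ (join Z (inv d1))) as [E|E]; auto.
      - apply join_l.
      - apply join_lub; auto. apply cov_le; auto.
      - exfalso. apply (cov_ne _ _ Hj). auto. }
    assert (E2 : join (inv d1) (meet Z (inv w)) = inv w).
    { rewrite modl by auto. rewrite join_comm, E. apply meet_eq'. auto. }
    assert (Hm : e < meet Z (inv w)).
    { split. apply meet_glb; auto. apply le_trans with (inv d1); auto.
      intro E3. apply H2. rewrite <- E2, <- E3. symmetry. apply join_eq'. auto. }
    destruct (up_cover _ _ Hm) as [y [Hy1 Hy2]].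
    exists (inv y). split. assert (Hx := proj1 (cov_X _ _) Hy1). rewrite idl in Hx. exact Hx.
    rewrite inv_inv. split.
    + apply le_trans with (meet Z (inv w)); auto. apply meet_r.
    + apply le_trans with (meet Z (inv w)); auto. apply meet_l.
Qed.

Lemma kprime c d1 d2 a1 a2 w : X c -> X d1 -> X d2 -> d1 <> d2 -> X a1 -> X a2 ->
  w = d1 * a1 -> w = d2 * a2 -> exists y, cov (c * w) y /\ y <= e /\ y <> w.
Proof. intros Hc Hd1 Hd2 Hne Ha1 Ha2 E1 E2.
  assert (Hcov1 : cov (inv d1) (inv w)) by (apply cov_X; rewrite inv_inv, E1; gn; auto).
  assert (Hd2w : inv d2 <= inv w) by (apply leN2; rewrite inv_inv, E2; gn; apply X_le; auto).
  assert (Hwe : w <= e) by (rewrite E1; apply N_mul; apply X_le; auto).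
  assert (HwD : inv w <= inv D).
  { assert (Hj : join (inv d1) (inv d2) = inv w).
    { destruct (proj2 Hcov1 (join (inv d1) (inv d2))) as [E|E]; auto.
      - apply join_l.
      - apply join_lub; auto. apply cov_le; auto.
      - exfalso. assert (H : inv d2 <= inv d1) by (rewrite <- E; apply join_r).
        destruct (proj2 (cov_e_inv d1 Hd1) (inv d2)) as [E3|E3]; auto.
        apply N_inv; apply X_le; auto.
        apply (X_ne d2); auto. rewrite <- (inv_inv d2), E3, inv_e. auto.
        apply Hne. apply inv_inj. auto. }
    rewrite <- Hj. apply join_lub; apply leN2; rewrite inv_inv; apply balance; auto. }
  destruct (claimC c d1 w Hc Hd1 (cov_le _ _ Hcov1) (cov_ne _ _ Hcov1) HwD) as [d [Hd [Hdw HdZ]]].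
  set (a := inv d * w).
  assert (Hae : a <= e) by (apply leN1 in Hdw; revert Hdw; unfold a; gn2; auto).
  assert (Hwa : w <= a) by (apply leN2; unfold a; gn2; apply X_le; auto).
  assert (Hwa2 : w <> a).
  { intro E. apply (X_ne d); auto. apply mul_cancel_r with w. rewrite idl. unfold a in E.
    rewrite E at 1. gn. auto. }
  set (Tp := inv D * c * w).
  assert (HDT : D * Tp = c * w) by (unfold Tp; gn; auto).
  set (r := meet Tp e).
  assert (HwT : w <= Tp) by (apply leN2; unfold Tp; gn2; apply balance; auto).
  assert (HaT : a <= Tp).
  { apply leN2. apply leN1 in HdZ. revert HdZ. unfold a, Tp. gn2. auto. }
  destruct (atom2 Tp (c * w) r w) as [y [Hy1 [Hy2 Hy3]]].
  - rewrite HDT. apply le_refl.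
  - apply meet_l.
  - apply cov_X. gn. auto.
  - apply meet_glb; auto.
  - intro E. apply Hwa2. apply le_anti; auto. rewrite E. apply meet_glb; auto.
  - exists y. split; auto. split; auto. apply le_trans with r; auto. apply meet_r.
Qed.

Local Notation MI := (meet_irreducible_neg e le meet).

Lemma two_covers g y1 y2 : cov g y1 -> cov g y2 -> y1 <> y2 -> meet y1 y2 = g.
Proof. intros H1 H2 Hne.
  destruct (proj2 H1 (meet y1 y2)) as [E|E]; auto.
  - apply meet_glb; apply cov_le; auto.
  - apply meet_l.
  - exfalso. assert (H : y1 <= y2) by (rewrite <- E; apply meet_r).
    destruct (proj2 H2 y1) as [E2|E2]; auto. apply cov_le; auto.
    apply (cov_ne _ _ H1); auto.
Qed.

Lemma kay g g1 : MI g -> cov g g1 -> g1 <= e -> MI g1.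
Proof. intros [Hg Hmi] Hgg1 Hg1. split; auto. intros [y1 [y2 [Hy1 [Hy2 [Hne1 [Hne2 Hm]]]]]].
  assert (Hl1 : g1 < y1) by (split; auto; rewrite Hm; apply meet_l).
  assert (Hl2 : g1 < y2) by (split; auto; rewrite Hm; apply meet_r).
  destruct (up_cover _ _ Hl1) as [u1 [Hu1 Hu1']].
  destruct (up_cover _ _ Hl2) as [u2 [Hu2 Hu2']].
  assert (Hu12 : u1 <> u2).
  { intro E. subst u2. apply (cov_ne _ _ Hu1). apply le_anti. apply cov_le; auto.
    rewrite Hm. apply meet_glb; auto. }
  assert (Hn21 : ~ u2 <= u1).
  { intro H. destruct (proj2 Hu1 u2) as [E|E]; auto. apply cov_le; auto.
    apply (cov_ne _ _ Hu2); auto. }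
  assert (Hn12 : ~ u1 <= u2).
  { intro H. destruct (proj2 Hu2 u1) as [E|E]; auto. apply cov_le; auto.
    apply (cov_ne _ _ Hu1); auto. }
  set (u := join u1 u2).
  assert (Hc1 : cov u1 u) by (apply (cov_up g1); auto; apply cov_le; auto).
  assert (Hc2 : cov u2 u).
  { unfold u. rewrite join_comm. apply (cov_up g1); auto. apply cov_le; auto. }
  assert (Hue : u <= e) by (apply join_lub; eapply le_trans; eauto).
  set (w := g1 * inv u).
  destruct (kprime (g * inv g1) (g1 * inv u1) (g1 * inv u2) (u1 * inv u) (u2 * inv u) w)
    as [y [Hy3 [Hy4 Hy5]]].
  - apply cov_X; auto.
  - apply cov_X; auto.
  - apply cov_X; auto.
  - intro E. apply Hu12. apply mul_cancel_l in E. apply inv_inj; auto.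
  - apply cov_X; auto.
  - apply cov_X; auto.
  - unfold w. gn. auto.
  - unfold w. gn. auto.
  - assert (Hc : cov g (y * u)).
    { apply (cov_r _ _ u) in Hy3. revert Hy3. unfold w. gn. auto. }
    assert (Hyu : y * u <> g1).
    { intro E. apply Hy5. unfold w. rewrite <- E. gn. auto. }
    apply Hmi. exists g1, (y * u). split; auto. split. apply N_mul; auto.
    split. intro E; apply (cov_ne _ _ Hgg1); auto.
    split. intro E; apply (cov_ne _ _ Hc); auto.
    symmetry. apply two_covers; auto.
Qed.

Lemma main_dir g : g <= e -> MI g -> dual_chain e le g.
Proof. intros Hg Hmi. apply NNPP. intro Hnc.
  destruct (max_elt e (fun g => g <= e /\ MI g /\ ~ dual_chain e le g)) as [h [[Hh1 [Hh2 Hh3]] Hh4]].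
  - exists g. auto.
  - intros x [H _]; auto.
  - apply Hh3. destruct (classic (h = e)) as [E|Hne].
    + subst h. intros x y Hx1 Hx2 Hy1 Hy2. left. apply le_trans with e; auto.
    + destruct (up_cover h e) as [g1 [Hg1 Hg1e]]. split; auto.
      assert (Huniq : forall y, h < y -> y <= e -> g1 <= y).
      { intros y Hy1 Hy2. destruct (up_cover _ _ Hy1) as [y1 [Hy3 Hy4]].
        destruct (classic (y1 = g1)) as [E|Hne2]. subst; auto.
        exfalso. destruct Hh2 as [_ Hmi2]. apply Hmi2. exists g1, y1.
        split; auto. split. apply le_trans with y; auto.
        split. intro E; apply (cov_ne _ _ Hg1); auto.
        split. intro E; apply (cov_ne _ _ Hy3); auto.
        symmetry. apply two_covers; auto. }
      assert (Hmi1 := kay h g1 Hh2 Hg1 Hg1e).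
      assert (Hch : dual_chain e le g1).
      { apply NNPP. intro H. apply (cov_ne _ _ Hg1). symmetry. apply Hh4.
        split; auto. apply cov_le; auto. }
      intros x y Hx1 Hx2 Hy1 Hy2.
      destruct (classic (x = h)) as [Ex|Nx]. subst x. left; auto.
      destruct (classic (y = h)) as [Ey|Ny]. subst y. right; auto.
      apply Hch; auto. apply Huniq; auto. split; auto. apply Huniq; auto. split; auto.
Qed.

End RL.

Theorem mainTheorem9 (T : Type) (mul : T -> T -> T) (inv : T -> T) (e : T)
  (le : T -> T -> Prop) (meet join : T -> T -> T) :
  is_right_lgroup mul inv e le meet join ->
  modular le meet join ->
  noetherian le ->
  (exists s_inv, is_glb le (covered_by_e e le) s_inv) ->
  forall g, negcone e le g ->
    (meet_irreducible_neg e le meet g <-> dual_chain e le g).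
Proof.
  intros HG Hmod Hnoeth [D HD] g Hg. split.
  - intro Hmi.
    destruct (classic (exists a, covered_by_e e le a)) as [[a Ha]|Hna].
    + assert (HDe : le D e).
      { apply (le_trans _ _ _ _ _ _ _ HG) with a. apply HD; auto. apply (X_le _ _ _ _ Ha). }
      eapply main_dir; eauto.
    + assert (E : g = e).
      { apply NNPP. intro Hne.
        destruct (down_cover _ _ _ _ _ _ _ HG Hnoeth g e) as [z [_ Hz]].
        split; auto. apply Hna. exists z. apply (X_cov _ _ _ _); auto. }
      subst g. intros x y Hx1 Hx2 Hy1 Hy2. left. apply (le_trans _ _ _ _ _ _ _ HG) with e; auto.
  - intros Hch. split; auto. intros [a [b [Ha [Hb [Hna [Hnb Hm]]]]]].
    assert (Hga : le g a) by (rewrite Hm; apply (meet_l _ _ _ _ _ _ _ HG)).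
    assert (Hgb : le g b) by (rewrite Hm; apply (meet_r _ _ _ _ _ _ _ HG)).
    destruct (Hch a b) as [H|H]; auto.
    + apply Hna. rewrite Hm. symmetry. apply (meet_eq _ _ _ _ _ _ _ HG); auto.
    + apply Hnb. rewrite Hm. symmetry. apply (meet_eq' _ _ _ _ _ _ _ HG); auto.
Qed.
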